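(* For $n\ge3$ let $\xi_1,\dots,\xi_n$ be i.i.d. random variables with a continuous distribution, arranged in a circle, and let $Z_n$ be the number of peaks, i.e. the number of $i$ with $\xi_i>\xi_{i-1}$ and $\xi_i>\xi_{i+1}$ (indices modulo $n$); set $Z_1=Z_2=1$. Then $Z_n\ge1$, $(Z_n)$ is stochastically increasing in $n$, $\mathbb E Z_n=n/3$ for $n\ge3$, $\mathrm{Var}\,Z_n=2n/45$ for $n\ge5$, $\mathbb E(Z_n-\mathbb E Z_n)^6=O(n^3)$, and $(Z_n)$ satisfies Condition 1 with $\alpha=1/3$.
   Context: Condition 1: $(Y_n)_{n\ge1}$ with $1\le Y_n\le n$, $\Pr(Y_n=n)<1$ for $n\ge2$, such that (i) $\Pr(Y_n\le k)\ge\Pr(Y_{n+1}\le k)$ for all $n,k\ge1$; (ii) for some $\alpha\in(0,1)$, $\varepsilon>0$ and $\delta_n=O((\log n)^{-1-\varepsilon})$, $\mathbb E Y_{n+1}-\mathbb E Y_n=\alpha+O(\delta_n)$; (iii) $\Pr(|Y_n-\alpha n|>\delta_n n)=O(n^{-2-\varepsilon})$. *)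

(* Defs.v *)
From Stdlib Require Import Reals.
From mathcomp Require Import all_boot all_fingroup.
Set Implicit Arguments. Unset Strict Implicit. Unset Printing Implicit Defensive.

Definition peaks (n : nat) (s : 'S_n) : nat :=
  #|[set i : 'I_n | (s (ord_pred i) < s i)%N && (s (ordS i) < s i)%N]|.

Definition peak_count (n k : nat) : nat := #|[set s : 'S_n | peaks s == k]|.

Local Open Scope R_scope.

(* For n >= 3 the relative order of n i.i.d.
   continuous random variables is a.s. a uniformly random permutation, so
   Pr(Z_n = k) = #{s in S_n : peaks s = k} / n!. *)
Definition PZ (n k : nat) : R :=
  if (n <= 2)%N then (if k == 1%N then 1 else 0)
  else INR (peak_count n k) / INR (factorial n).

(* Generic notions for a sequence of N-valued laws p n k = Pr(Y_n = k)
   supported in {0..n}. *)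
Definition cdf (p : nat -> nat -> R) (n k : nat) : R :=
  sum_f_R0 (fun j => p n j) k.

Definition mean (p : nat -> nat -> R) (n : nat) : R :=
  sum_f_R0 (fun k => INR k * p n k) n.

Definition central_moment (p : nat -> nat -> R) (m n : nat) : R :=
  sum_f_R0 (fun k => (INR k - mean p n) ^ m * p n k) n.

Definition bigO (x g : nat -> R) : Prop :=
  exists C N, forall n : nat, (N <= n)%nat -> Rabs (x n) <= C * g n.

Definition Condition1 (p : nat -> nat -> R) (alpha : R) : Prop :=
  (forall n k, (1 <= n)%nat -> 0 <= p n k) /\
  (forall n, (1 <= n)%nat -> sum_f_R0 (fun k => p n k) n = 1) /\
  (forall n k, (1 <= n)%nat -> p n k <> 0 -> (1 <= k <= n)%nat) /\
  (forall n, (2 <= n)%nat -> p n n < 1) /\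
  (forall n k, (1 <= n)%nat -> (1 <= k)%nat -> cdf p n k >= cdf p (S n) k) /\
  0 < alpha < 1 /\
  exists (eps : R) (delta : nat -> R), 0 < eps /\
    bigO delta (fun n => Rpower (ln (INR n)) (-1 - eps)) /\
    bigO (fun n => mean p (S n) - mean p n - alpha) delta /\
    bigO (fun n => sum_f_R0 (fun k =>
            if Rlt_dec (delta n * INR n) (Rabs (INR k - alpha * INR n))
            then p n k else 0) n)
         (fun n => Rpower (INR n) (-2 - eps)).

(* Main.v *)
Require Import Defs.
From Stdlib Require Import Reals Lra Lia Psatz Arith List.

Module Comb.
From Stdlib Require Import Lia Lra Psatz.
From mathcomp Require Import all_boot all_fingroup zify.
Set Implicit Arguments. Unset Strict Implicit. Unset Printing Implicit Defensive.

Definition Qp n (s : 'S_n) (i : 'I_n) : bool :=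
  (s (ord_pred i) < s i) && (s (ordS i) < s i).

Lemma peaksE n (s : 'S_n) : peaks s = \sum_(i < n) (Qp s i : nat).
Proof.
rewrite /peaks cardsE -sum1_card big_mkcond /=.
by apply: eq_bigr => i _; rewrite /Qp -topredE /=; case: ifP.
Qed.

Lemma peak_countE n k : peak_count n k = \sum_(s : 'S_n) (peaks s == k : nat).
Proof.
rewrite /peak_count cardsE -sum1_card big_mkcond /=.
by apply: eq_bigr => i _; rewrite -topredE /= -[eqn _ _]/(_ == _); case: ifP.
Qed.

Lemma ord_predE n (i : 'I_n) : (ord_pred i : nat) = if (i : nat) == 0 then n.-1 else (i : nat).-1.
Proof.
case: i => [[|i] hi] /=.
  by rewrite add0n modn_small //; lia.
by rewrite modnDr modn_small //; lia.
Qed.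

Lemma ordSE n (i : 'I_n) : (ordS i : nat) = if (i : nat) == n.-1 then 0 else (i : nat).+1.
Proof.
case: i => [i hi] /=; case: eqP => h.
  by rewrite h prednK ?modnn //; lia.
by rewrite modn_small //; lia.
Qed.

Definition rho n : 'S_n := perm (@ordS_inj n).
Lemma rhoE n i : rho n i = ordS i. Proof. by rewrite permE. Qed.

Lemma Qp_rot n (s : 'S_n) i : Qp (rho n * s)%g i = Qp s (ordS i).
Proof. by rewrite /Qp !permM !rhoE ord_predK ordSK. Qed.

Lemma peaks_rot n (s : 'S_n) : peaks (rho n * s)%g = peaks s.
Proof.
rewrite !peaksE (eq_bigr (fun i => (Qp s (ordS i) : nat))); last by move=> i _; rewrite Qp_rot.
by rewrite [RHS](reindex_inj (@ordS_inj n)).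
Qed.

Lemma sum_rot n (F : 'S_n -> nat) : \sum_(s : 'S_n) F (rho n * s)%g = \sum_s F s.
Proof. by rewrite [RHS](reindex_inj (mulgI (rho n))). Qed.

Lemma rot_const n (G : 'I_n.+1 -> nat) : (forall i, G (ordS i) = G i) -> forall i, G i = G ord0.
Proof.
move=> H i.
have K : forall k, G (inord k) = G ord0.
  elim => [|k IH]; first by congr G; apply: val_inj; rewrite /= inordK.
  case: (ltnP k.+1 n.+1) => hk.
    have -> : inord k.+1 = ordS (inord k) :> 'I_n.+1.
      by apply: val_inj; rewrite /= !inordK ?modn_small //; lia.
    by rewrite H.
  congr G; apply: val_inj; rewrite /inord /insubd insubF //; by apply/negbTE; rewrite -leqNgt.
by rewrite -(inord_val i) K.
Qed.

Lemma sum_const_rot n (G : 'I_n.+1 -> nat) : (forall i, G (ordS i) = G i) ->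
  \sum_(i < n.+1) G i = n.+1 * G ord0.
Proof.
move=> H; rewrite (eq_bigr (fun _ => G ord0)); last by move=> i _; apply: rot_const.
by rewrite sum_nat_const card_ord.
Qed.

Lemma ordv n (x y : 'I_n) : (x : nat) = y -> x = y.
Proof. exact: val_inj. Qed.

Lemma sum_fix_max n (F : 'S_n.+1 -> nat) :
  \sum_(s : 'S_n.+1 | s ord_max == ord_max) F s =
  \sum_(t : 'S_n) F (lift_perm ord_max ord_max t).
Proof.
rewrite (reindex (lift_perm ord_max ord_max)); last first.
  pose ulsf i (s : 'S_n.+1) k := odflt k (unlift (s i) (s (lift i k))).
  have ulsfK i (s : 'S_n.+1) k: lift (s i) (ulsf i s k) = s (lift i k).
    rewrite /ulsf; have:= neq_lift i k.
    by rewrite -(can_eq (permK s)) => /unlift_some[] ? ? ->.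
  have inj_ulsf: injective (ulsf ord_max _).
    move=> s; apply: can_inj (ulsf (s ord_max) s^-1%g) _ => k'.
    by rewrite {1}/ulsf ulsfK !permK liftK.
  exists (fun s => perm (inj_ulsf s)) => [s _ | s].
    by apply/permP=> k'; rewrite permE /ulsf lift_perm_lift lift_perm_id liftK.
  move/(s _ =P _) => si0; apply/permP=> k.
  case: (unliftP ord_max k) => [k'|] ->; rewrite ?lift_perm_id //.
  by rewrite lift_perm_lift permE; have := ulsfK ord_max s k'; rewrite si0.
by apply: eq_big => [s | s _] //; rewrite lift_perm_id eqxx.
Qed.

Lemma sum_eq1 n (s : 'S_n) j : \sum_(r < n) (s r == j : nat) = 1.
Proof.
rewrite (bigD1 (s^-1 j)%g) //= permKV eqxx big1 // => r hr.
case: eqP => // h; move: hr; by rewrite -h permK eqxx.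
Qed.

Lemma count_split n k : peak_count n.+1 k =
  n.+1 * \sum_(s : 'S_n.+1 | s ord_max == ord_max) (peaks s == k : nat).
Proof.
rewrite peak_countE.
rewrite (eq_bigr (fun s : 'S_n.+1 => \sum_(r < n.+1) (s r == ord_max : nat) * (peaks s == k))); last first.
  by move=> s _; rewrite -big_distrl /= sum_eq1 mul1n.
rewrite exchange_big /=.
set G := fun r : 'I_n.+1 => \sum_(s : 'S_n.+1) (s r == ord_max : nat) * (peaks s == k).
have HG : forall i, G (ordS i) = G i.
  move=> i; rewrite /G -[in RHS](sum_rot (fun s => (s i == ord_max : nat) * (peaks s == k))).
  by apply: eq_bigr => s _; rewrite peaks_rot permM rhoE.
rewrite (sum_const_rot HG) -(rot_const HG ord_max).
rewrite /G [in RHS]big_mkcond /=; congr (_ * _); apply: eq_bigr => s _; case: eqP => _; by rewrite ?mul1n ?mul0n.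
Qed.

Lemma Qp_lift m (t : 'S_m.+2) (j : 'I_m.+2) :
  (Qp (lift_perm ord_max ord_max t) (lift ord_max j) : nat)
  + (j == ord0 :> 'I_m.+2) * Qp t j + (j == ord_max :> 'I_m.+2) * Qp t j = Qp t j.
Proof.
set L := lift_perm ord_max ord_max t.
have LE : forall x : 'I_m.+2, (L (lift ord_max x) : nat) = t x.
  by move=> x; rewrite /L lift_perm_lift lift_max.
have Lmax : (L ord_max : nat) = m.+2 by rewrite /L lift_perm_id.
have tlt : forall x, (t x : nat) < m.+2 by move=> x; exact: ltn_ord.
rewrite /Qp.
case: (eqVneq (j : nat) 0) => j0.
  have -> : ord_pred (lift ord_max j) = ord_max.
    by apply: ordv; rewrite ord_predE lift_max j0.
  have -> : (j == ord0) = true by apply/eqP/val_inj.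
  have -> : (j == ord_max) = false by apply/eqP => h; move: j0; rewrite h.
  rewrite Lmax LE.
  have /negbTE -> : ~~ (m.+2 < t j) by rewrite -leqNgt ltnW.
  by rewrite mul1n mul0n addn0.
case: (eqVneq (j : nat) m.+1) => j1.
  have -> : ordS (lift ord_max j) = ord_max.
    by apply: ordv; rewrite ordSE lift_max j1; case: eqP => //=; lia.
  have -> : (j == ord0) = false by apply/eqP => h; move: j0; rewrite h.
  have -> : (j == ord_max) = true by apply/eqP/val_inj.
  rewrite Lmax LE.
  have /negbTE -> : ~~ (m.+2 < t j) by rewrite -leqNgt ltnW.
  by rewrite andbF mul1n mul0n.
have -> : (j == ord0) = false by apply/eqP => h; move: j0; rewrite h.
have -> : (j == ord_max) = false by apply/negbTE; apply: contra_neq j1 => ->.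
have -> : ord_pred (lift ord_max j) = lift ord_max (ord_pred j).
  by apply: ordv; rewrite ord_predE !lift_max ord_predE (negbTE j0).
have -> : ordS (lift ord_max j) = lift ord_max (ordS j).
  apply: ordv; rewrite ordSE !lift_max ordSE (negbTE j1).
  have /negbTE -> : (j : nat) != m.+2 by have := ltn_ord j; lia.
  by [].
by rewrite !LE !addn0.
Qed.

Lemma Qp_lift_max m (t : 'S_m.+2) : Qp (lift_perm ord_max ord_max t) ord_max = true.
Proof.
rewrite /Qp lift_perm_id /=.
have h1 : forall x : 'I_m.+3, x != ord_max -> (lift_perm ord_max ord_max t x : nat) < m.+2.
  move=> x hx; case: (unliftP ord_max x) => [x'|] ex; last by rewrite ex eqxx in hx.
  by rewrite ex lift_perm_lift lift_max.
rewrite !h1 //; apply/eqP => H; have := congr1 (@nat_of_ord _) H; rewrite ?ordSE ?ord_predE /=; rewrite ?eqxx; lia.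

Qed.

Lemma peaks_lift_pos m (t : 'S_m.+2) : 0 < peaks (lift_perm ord_max ord_max t).
Proof. by rewrite peaksE (bigD1 ord_max) //= Qp_lift_max. Qed.

Lemma peaks_lift m (t : 'S_m.+2) :
  peaks (lift_perm ord_max ord_max t) + (Qp t ord0 || Qp t ord_max) = (peaks t).+1.
Proof.
rewrite !peaksE big_ord_recr /=.
rewrite Qp_lift_max.
have E : forall j : 'I_m.+2, widen_ord (leqnSn m.+2) j = lift ord_max j.
  by move=> j; apply: ordv; rewrite lift_max.
have sm : forall (a : 'I_m.+2) (f : 'I_m.+2 -> nat), \sum_(j < m.+2) (j == a) * f j = f a.
  move=> a f; rewrite (bigD1 a) //= eqxx mul1n big1 ?addn0 // => j /negbTE ->; by rewrite mul0n.
have S : \sum_(j < m.+2) ((Qp (lift_perm ord_max ord_max t) (widen_ord (leqnSn m.+2) j) : nat)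
   + ((j == ord0 :> 'I_m.+2) * Qp t j + (j == ord_max :> 'I_m.+2) * Qp t j)) = \sum_(j < m.+2) (Qp t j : nat).
  by apply: eq_bigr => j _; rewrite E addnA Qp_lift.
rewrite !big_split /= !sm in S.
have nb : ~~ (Qp t ord0 && Qp t ord_max).
  rewrite /Qp; apply/negP => /andP [/andP [g1 g2] /andP [g3 g4]].
  have e1 : ord_pred (ord0 : 'I_m.+2) = ord_max by apply: ordv; rewrite ord_predE.
  have e2 : ordS (ord_max : 'I_m.+2) = ord0 by apply: ordv; rewrite ordSE /= eqxx.
  rewrite e1 in g1; rewrite e2 in g4; lia.
move: nb S; case: (Qp t ord0); case: (Qp t ord_max) => //= _; lia.
Qed.

Lemma not_both m (t : 'S_m.+2) : ~~ (Qp t ord0 && Qp t ord_max).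
Proof.
rewrite /Qp; apply/negP => /andP [/andP [g1 g2] /andP [g3 g4]].
have e1 : ord_pred (ord0 : 'I_m.+2) = ord_max by apply: ordv; rewrite ord_predE.
have e2 : ordS (ord_max : 'I_m.+2) = ord0 by apply: ordv; rewrite ordSE /= eqxx.
rewrite e1 in g1; rewrite e2 in g4; lia.
Qed.

Definition Dk n k (r : 'I_n) := \sum_(t : 'S_n) (Qp t r : nat) * (peaks t == k).

Lemma Dk_rot n k (r : 'I_n) : Dk k (ordS r) = Dk k r.
Proof.
rewrite /Dk -[in RHS](sum_rot (fun t => (Qp t r : nat) * (peaks t == k))).
by apply: eq_bigr => t _; rewrite Qp_rot peaks_rot.
Qed.

Lemma Dk_sum n k : \sum_(r < n) Dk k r = k * peak_count n k.
Proof.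
rewrite /Dk exchange_big peak_countE big_distrr /=; apply: eq_bigr => t _.
rewrite -big_distrl /= -peaksE; by case: eqP => [->|]; rewrite ?muln1 ?muln0.
Qed.

Lemma Dk_val m k : m.+2 * Dk k (ord0 : 'I_m.+2) = k * peak_count m.+2 k.
Proof. by rewrite -Dk_sum (sum_const_rot (@Dk_rot m.+2 k)). Qed.

Definition Ak m k := \sum_(t : 'S_m.+2) (Qp t ord0 || Qp t ord_max : nat) * (peaks t == k).

Lemma Ak_val m k : m.+2 * Ak m k = 2 * (k * peak_count m.+2 k).
Proof.
have -> : Ak m k = Dk k (ord0 : 'I_m.+2) + Dk k (ord_max : 'I_m.+2).
  rewrite /Ak /Dk -big_split /=; apply: eq_bigr => t _.
  by move: (not_both t); case: (Qp t ord0); case: (Qp t ord_max) => //=; lia.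
by rewrite (rot_const (@Dk_rot m.+2 k) ord_max) -Dk_val; lia.
Qed.

Lemma rec_nat m j : m.+2 * peak_count m.+3 j.+1 + m.+3 * (2 * (j * peak_count m.+2 j))
  = m.+3 * (2 * (j.+1 * peak_count m.+2 j.+1) + m.+2 * peak_count m.+2 j).
Proof.
rewrite count_split sum_fix_max.
set X := \sum_(t : 'S_m.+2) _.
have HX : X + Ak m j = Ak m j.+1 + peak_count m.+2 j.
  rewrite /X /Ak peak_countE -!big_split /=; apply: eq_bigr => t _.
  have := peaks_lift t; move: (Qp t ord0 || Qp t ord_max) => [] /= h.
    have -> : peaks (lift_perm ord_max ord_max t) = peaks t by lia.
    by rewrite mul1n; case: eqP; case: eqP => //; lia.
  have -> : peaks (lift_perm ord_max ord_max t) = (peaks t).+1 by lia.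
  by rewrite !mul0n eqSS addn0.
have := Ak_val m j; have := Ak_val m j.+1; nia.
Qed.

Lemma rec_nat0 m : peak_count m.+3 0 = 0.
Proof.
rewrite count_split sum_fix_max big1 ?muln0 // => t _.
by have := peaks_lift_pos t; case: eqP => // ->.
Qed.

Lemma peaks3 k : peak_count 3 k = 6 * (k == 1).
Proof.
rewrite (count_split 2 k) sum_fix_max (eq_bigr (fun _ => (k == 1 : nat))).
  by rewrite sum_nat_const card_Sn; case: (k == 1).
move=> t _.
have h1 : peaks t = Qp t ord0 + Qp t ord_max.
  rewrite peaksE !big_ord_recl big_ord0 addn0; by rewrite (_ : lift ord0 ord0 = ord_max :> 'I_2) //; apply: ordv.
have := peaks_lift t; have := not_both t; rewrite h1.
case: (Qp t ord0); case: (Qp t ord_max) => //= _ h2.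
  have -> : peaks (lift_perm ord_max ord_max t) = 1 by lia.
  by rewrite eq_sym.
have -> : peaks (lift_perm ord_max ord_max t) = 1 by lia.
by rewrite eq_sym.
have -> : peaks (lift_perm ord_max ord_max t) = 1 by lia.
by rewrite eq_sym.
Qed.

Section RealExports.
Local Open Scope R_scope.

Lemma natR_eq (a b : nat) : a = b -> INR a = INR b.
Proof. by move=> ->. Qed.

Lemma cnt_rec m j : INR (S (S m)) * INR (peak_count (S (S (S m))) (S j))
   + INR (S (S (S m))) * (2 * INR j * INR (peak_count (S (S m)) j))
   = INR (S (S (S m))) * (2 * INR (S j) * INR (peak_count (S (S m)) (S j))
     + INR (S (S m)) * INR (peak_count (S (S m)) j)).
Proof.
have e2 : 2 = INR 2 by rewrite /= ; ring.
rewrite e2 -!mult_INR -!plus_INR -!mult_INR; f_equal.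
have := rec_nat m j; rewrite -!multE -!plusE; lia.
Qed.

Lemma cnt0 m : peak_count (S (S (S m))) 0 = 0%nat.
Proof. exact: rec_nat0. Qed.

Lemma cnt3_1 : peak_count 3 1 = 6%nat.
Proof. by rewrite peaks3. Qed.

Lemma cnt3_ne k : k <> 1%nat -> peak_count 3 k = 0%nat.
Proof. by move=> h; rewrite peaks3; case: eqP. Qed.

Lemma cnt_big n k : (n < k)%coq_nat -> peak_count n k = 0%nat.
Proof.
move=> /ltP h; rewrite peak_countE big1 // => s _.
have : (peaks s <= n)%N.
  by rewrite /peaks; apply: leq_trans (max_card _) _; rewrite card_ord.
by case: eqP => // ->; lia.
Qed.

Lemma factS_R n : INR (factorial (S n)) = INR (S n) * INR (factorial n).
Proof. by rewrite factS -multE mult_INR. Qed.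

Lemma fact_pos n : 0 < INR (factorial n).
Proof. apply: lt_0_INR; apply/ltP; exact: fact_gt0. Qed.

Lemma PZ_ge3 m k : PZ (S (S (S m))) k =
  INR (peak_count (S (S (S m))) k) / INR (factorial (S (S (S m)))).
Proof. by []. Qed.

Lemma PZ_small_1 n : (n <= 2)%coq_nat -> PZ n 1 = 1.
Proof. by move=> /leP h; rewrite /PZ h. Qed.

Lemma PZ_small_ne n k : (n <= 2)%coq_nat -> k <> 1%nat -> PZ n k = 0.
Proof. by move=> /leP h hk; rewrite /PZ h; case: eqP. Qed.

Lemma leqP' a b : is_true (a <= b)%N <-> (a <= b)%coq_nat.
Proof. split; [move/leP => //|move=> h; apply/leP => //]. Qed.

Lemma leq2P a b c : is_true ((a <= b) && (b <= c))%N <-> (le a b /\ le b c).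
Proof. split; [move/andP => [/leP h1 /leP h2] //|move=> [h1 h2]; apply/andP; split; apply/leP => //]. Qed.

End RealExports.
End Comb.

Notation cnt_rec := Comb.cnt_rec.
Notation cnt0 := Comb.cnt0.
Notation cnt3_1 := Comb.cnt3_1.
Notation cnt3_ne := Comb.cnt3_ne.
Notation cnt_big := Comb.cnt_big.
Notation factS_R := Comb.factS_R.
Notation fact_pos := Comb.fact_pos.
Notation PZ_ge3 := Comb.PZ_ge3.
Notation PZ_small_1 := Comb.PZ_small_1.
Notation PZ_small_ne := Comb.PZ_small_ne.
Notation leqP' := Comb.leqP'.
Notation leq2P := Comb.leq2P.

Module RealPart.
From Stdlib Require Import Lra Lia Psatz Arith List.
Import ListNotations.
Open Scope R_scope.

Lemma ge3 n : (3 <= n)%nat -> exists m, n = S (S (S m)).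
Proof. intros h; exists (n - 3)%nat; lia. Qed.

Lemma INR_pos3 n : (3 <= n)%nat -> 0 < INR n.
Proof. intros h; apply lt_0_INR; lia. Qed.

Lemma PZ_nonneg n k : (1 <= n)%nat -> 0 <= PZ n k.
Proof.
  intros h. destruct (le_lt_dec n 2) as [h2|h2].
  - destruct (Nat.eq_dec k 1) as [->|hk].
    + rewrite PZ_small_1 by lia; lra.
    + rewrite PZ_small_ne by lia; lra.
  - destruct (ge3 n) as [m ->]; [lia|]. rewrite PZ_ge3.
    unfold Rdiv; apply Rmult_le_pos; [apply pos_INR| apply Rlt_le, Rinv_0_lt_compat, fact_pos].
Qed.

Lemma PZ_zero n : (1 <= n)%nat -> PZ n 0 = 0.
Proof.
  intros h. destruct (le_lt_dec n 2) as [h2|h2].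
  - rewrite PZ_small_ne by lia; lra.
  - destruct (ge3 n) as [m ->]; [lia|]. rewrite PZ_ge3.
    destruct m as [|m].
    + rewrite cnt3_ne; [simpl; lra|lia].
    + rewrite cnt0. simpl; lra.
Qed.

Lemma PZ_big n k : (3 <= n)%nat -> (n < k)%nat -> PZ n k = 0.
Proof.
  intros h hk. destruct (ge3 n) as [m ->]; [lia|]. rewrite PZ_ge3, cnt_big; [simpl; lra|lia].
Qed.

Lemma PZ3_1 : PZ 3 1 = 1.
Proof. rewrite (PZ_ge3 0), cnt3_1. simpl. field. Qed.

Lemma PZ3_ne k : k <> 1%nat -> PZ 3 k = 0.
Proof. intros h. rewrite (PZ_ge3 0), cnt3_ne; [simpl; field|exact h]. Qed.

Lemma PZ_rec n k : (3 <= n)%nat ->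
  PZ (S n) (S k) = 2 * INR (S k) / INR n * PZ n (S k) + (INR n - 2 * INR k) / INR n * PZ n k.
Proof.
  intros h. destruct (ge3 n) as [m ->]; [lia|].
  rewrite (PZ_ge3 (S m)), !PZ_ge3, factS_R.
  pose proof (cnt_rec (S m) k) as H.
  pose proof (fact_pos (S (S (S m)))) as F.
  set (N := INR (S (S (S m)))) in *.
  assert (HN : INR (S (S (S (S m)))) = N + 1) by (unfold N; rewrite (S_INR (S (S (S m)))); ring).
  rewrite HN in *.
  assert (N > 0) by (unfold N; apply lt_0_INR; lia).
  set (a := INR (peak_count (S (S (S (S m)))) (S k))) in *.
  assert (Ha : a = (N + 1) * (2 * INR (S k) * INR (peak_count (S (S (S m))) (S k)) + (N - 2 * INR k) * INR (peak_count (S (S (S m))) k)) / N).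
  { apply (Rmult_eq_reg_l N); [|lra]. field_simplify; [|lra]. lra. }
  rewrite Ha. field. split; lra.
Qed.

Lemma PZ_rec0 n : (3 <= n)%nat -> PZ (S n) 0 = 0.
Proof. intros h; apply PZ_zero; lia. Qed.

Definition E n (f : nat -> R) := sum_f_R0 (fun k => f k * PZ n k) n.

Lemma E_ext n f g : (forall k, f k = g k) -> E n f = E n g.
Proof. intros h; unfold E; apply sum_eq; intros; rewrite h; ring. Qed.

Lemma E_add n f g : E n (fun k => f k + g k) = E n f + E n g.
Proof. unfold E; rewrite <- plus_sum; apply sum_eq; intros; ring. Qed.

Lemma E_scal n c f : E n (fun k => c * f k) = c * E n f.
Proof. unfold E; rewrite scal_sum; apply sum_eq; intros; ring. Qed.

Lemma sum_split_rec n f : (3 <= n)%nat -> forall N,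
  sum_f_R0 (fun k => f k * PZ (S n) k) (S N) =
  sum_f_R0 (fun k => 2 * INR k / INR n * f k * PZ n k) (S N) +
  sum_f_R0 (fun k => (INR n - 2 * INR k) / INR n * f (S k) * PZ n k) N.
Proof.
  intros h. pose proof (INR_pos3 n h) as Hn.
  induction N as [|N IH].
  - cbn [sum_f_R0]. rewrite PZ_rec0 by exact h. rewrite PZ_rec by exact h. simpl INR. field. lra.
  - rewrite tech5, IH, !tech5.
    rewrite PZ_rec by exact h. field. lra.
Qed.

Lemma E_rec n f : (3 <= n)%nat ->
  E (S n) f = E n (fun k => 2 * INR k / INR n * f k + (INR n - 2 * INR k) / INR n * f (S k)).
Proof.
  intros h. unfold E. rewrite sum_split_rec by exact h.
  rewrite tech5, (PZ_big n (S n)) by lia.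
  rewrite Rmult_0_r, Rplus_0_r, <- plus_sum. apply sum_eq; intros; ring.
Qed.

Lemma E3 f : E 3 f = f 1%nat.
Proof.
  unfold E; simpl. rewrite PZ3_1, !PZ3_ne by lia. ring.
Qed.

Lemma E_one n : (3 <= n)%nat -> E n (fun _ => 1) = 1.
Proof.
  intros h. induction n as [|n IH]; [lia|].
  destruct (Nat.eq_dec n 2) as [->|hn]; [apply E3|].
  rewrite E_rec by lia. transitivity (E n (fun _ => 1)); [|apply IH; lia].
  apply E_ext; intros k. field. apply Rgt_not_eq, INR_pos3; lia.
Qed.

Definition Mo r n := E n (fun k => (INR k - INR n / 3) ^ r).

Fixpoint pv (cs : list R) (j : nat) (x : R) : R :=
  match cs with nil => 0 | c :: cs' => c * x ^ j + pv cs' (S j) x end.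
Fixpoint mc (cs : list R) (j n : nat) : R :=
  match cs with nil => 0 | c :: cs' => c * Mo j n + mc cs' (S j) n end.

Lemma E_pv n cs : forall j, E n (fun k => pv cs j (INR k - INR n / 3)) = mc cs j n.
Proof.
  induction cs as [|c cs IH]; intros j; simpl.
  - transitivity (E n (fun k => 0 * 1)); [apply E_ext; intros; ring|].
    rewrite E_scal; ring.
  - rewrite E_add, E_scal, IH. reflexivity.
Qed.

Definition h_r (r n : nat) (x : R) :=
  (2/3 + 2 * x / INR n) * (x - 1/3) ^ r + (1/3 - 2 * x / INR n) * (x + 2/3) ^ r.

Lemma Mo_rec r n : (3 <= n)%nat -> Mo r (S n) = E n (fun k => h_r r n (INR k - INR n / 3)).
Proof.
  intros h. pose proof (INR_pos3 n h). unfold Mo. rewrite E_rec by exact h. apply E_ext; intros k.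
  unfold h_r. rewrite !S_INR.
  replace (INR k - (INR n + 1) / 3) with (INR k - INR n / 3 - 1/3) by field.
  replace (INR k + 1 - (INR n + 1) / 3) with (INR k - INR n / 3 + 2/3) by field.
  set (A := (INR k - INR n / 3 - 1 / 3) ^ r). set (B := (INR k - INR n / 3 + 2 / 3) ^ r).
  field. lra.
Qed.

Lemma exact_from (a p c L : nat -> R) r0 :
  (forall n, (r0 <= n)%nat -> a (S n) = c n * a n + L n) ->
  (forall n, (r0 <= n)%nat -> p (S n) = c n * p n + L n) ->
  c r0 = 0 -> forall n, (S r0 <= n)%nat -> a n = p n.
Proof.
  intros Ha Hp Hc n hn. induction n as [|n IH]; [lia|].
  destruct (Nat.eq_dec n r0) as [->|hne].
  - rewrite Ha, Hp, Hc by lia. ring.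
  - rewrite Ha, Hp, IH by lia. reflexivity.
Qed.

Lemma Mo0_one n : (3 <= n)%nat -> Mo 0 n = 1.
Proof. intros h. unfold Mo. rewrite <- (E_one n h). apply E_ext; intros; simpl; ring. Qed.

Lemma Mo1_rec n : (3 <= n)%nat -> Mo 1 (S n) = mc [((0) + (0) / INR n); ((1) + (-2) / INR n)] 0 n.
Proof. intros h. rewrite Mo_rec by exact h. rewrite <- E_pv. apply E_ext; intros k. unfold h_r, pv. field. apply Rgt_not_eq, INR_pos3; exact h. Qed.

Lemma Mo1_zero n : (3 <= n)%nat -> Mo 1 n = 0.
Proof.
  intros h. induction n as [|n IH]; [lia|].
  destruct (Nat.eq_dec n 2) as [->|hn].
  - unfold Mo. rewrite E3. simpl. field.
  - rewrite Mo1_rec by lia. simpl mc. rewrite Mo0_one, IH by lia. field. apply Rgt_not_eq, INR_pos3; lia.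
Qed.

Lemma Mo2_rec n : (3 <= n)%nat -> Mo 2 (S n) = mc [((2/9) + (0) / INR n); ((0) + (-2/3) / INR n); ((1) + (-4) / INR n)] 0 n.
Proof. intros h. rewrite Mo_rec by exact h. rewrite <- E_pv. apply E_ext; intros k. unfold h_r, pv. field. apply Rgt_not_eq, INR_pos3; exact h. Qed.

Definition L2 (n : nat) := ((2/9) + (0) / INR n) * 1 + ((0) + (-2/3) / INR n) * 0.
Definition p2 (n : nat) := (2*INR n/45).
Definition c2 (n : nat) := ((1) + (-4) / INR n).
Lemma Mo2_exact n : (5 <= n)%nat -> Mo 2 n = p2 n.
Proof.
  apply (exact_from (Mo 2) p2 c2 L2 4).
  - intros m hm. rewrite Mo2_rec by lia. simpl mc. rewrite Mo0_one by lia. rewrite Mo1_zero by lia.  unfold c2, L2; ring.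
  - intros m hm. unfold p2, c2, L2. rewrite S_INR. field. apply Rgt_not_eq; apply lt_0_INR; lia.
  - unfold c2. simpl INR. field.
Qed.

Lemma Mo3_rec n : (3 <= n)%nat -> Mo 3 (S n) = mc [((2/27) + (0) / INR n); ((2/3) + (-2/3) / INR n); ((0) + (-2) / INR n); ((1) + (-6) / INR n)] 0 n.
Proof. intros h. rewrite Mo_rec by exact h. rewrite <- E_pv. apply E_ext; intros k. unfold h_r, pv. field. apply Rgt_not_eq, INR_pos3; exact h. Qed.

Definition L3 (n : nat) := ((2/27) + (0) / INR n) * 1 + ((2/3) + (-2/3) / INR n) * 0 + ((0) + (-2) / INR n) * (2*INR n/45).
Definition p3 (n : nat) := (-2*INR n/945).
Definition c3 (n : nat) := ((1) + (-6) / INR n).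
Lemma Mo3_exact n : (7 <= n)%nat -> Mo 3 n = p3 n.
Proof.
  apply (exact_from (Mo 3) p3 c3 L3 6).
  - intros m hm. rewrite Mo3_rec by lia. simpl mc. rewrite Mo0_one by lia. rewrite Mo1_zero by lia. rewrite Mo2_exact by lia. unfold p2. unfold c3, L3; ring.
  - intros m hm. unfold p3, c3, L3. rewrite S_INR. field. apply Rgt_not_eq; apply lt_0_INR; lia.
  - unfold c3. simpl INR. field.
Qed.

Lemma Mo4_rec n : (3 <= n)%nat -> Mo 4 (S n) = mc [((2/27) + (0) / INR n); ((8/27) + (-10/27) / INR n); ((4/3) + (-8/3) / INR n); ((0) + (-4) / INR n); ((1) + (-8) / INR n)] 0 n.
Proof. intros h. rewrite Mo_rec by exact h. rewrite <- E_pv. apply E_ext; intros k. unfold h_r, pv. field. apply Rgt_not_eq, INR_pos3; exact h. Qed.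

Definition L4 (n : nat) := ((2/27) + (0) / INR n) * 1 + ((8/27) + (-10/27) / INR n) * 0 + ((4/3) + (-8/3) / INR n) * (2*INR n/45) + ((0) + (-4) / INR n) * (-2*INR n/945).
Definition p4 (n : nat) := (-22*INR n/4725 + 4*INR n^2/675).
Definition c4 (n : nat) := ((1) + (-8) / INR n).
Lemma Mo4_exact n : (9 <= n)%nat -> Mo 4 n = p4 n.
Proof.
  apply (exact_from (Mo 4) p4 c4 L4 8).
  - intros m hm. rewrite Mo4_rec by lia. simpl mc. rewrite Mo0_one by lia. rewrite Mo1_zero by lia. rewrite Mo2_exact by lia. rewrite Mo3_exact by lia. unfold p2. unfold p3. unfold c4, L4; ring.
  - intros m hm. unfold p4, c4, L4. rewrite S_INR. field. apply Rgt_not_eq; apply lt_0_INR; lia.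
  - unfold c4. simpl INR. field.
Qed.

Lemma Mo5_rec n : (3 <= n)%nat -> Mo 5 (S n) = mc [((10/243) + (0) / INR n); ((10/27) + (-22/81) / INR n); ((20/27) + (-50/27) / INR n); ((20/9) + (-20/3) / INR n); ((0) + (-20/3) / INR n); ((1) + (-10) / INR n)] 0 n.
Proof. intros h. rewrite Mo_rec by exact h. rewrite <- E_pv. apply E_ext; intros k. unfold h_r, pv. field. apply Rgt_not_eq, INR_pos3; exact h. Qed.

Definition L5 (n : nat) := ((10/243) + (0) / INR n) * 1 + ((10/27) + (-22/81) / INR n) * 0 + ((20/27) + (-50/27) / INR n) * (2*INR n/45) + ((20/9) + (-20/3) / INR n) * (-2*INR n/945) + ((0) + (-20/3) / INR n) * (-22*INR n/4725 + 4*INR n^2/675).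
Definition p5 (n : nat) := (2*INR n/4455 - 8*INR n^2/8505).
Definition c5 (n : nat) := ((1) + (-10) / INR n).
Lemma Mo5_exact n : (11 <= n)%nat -> Mo 5 n = p5 n.
Proof.
  apply (exact_from (Mo 5) p5 c5 L5 10).
  - intros m hm. rewrite Mo5_rec by lia. simpl mc. rewrite Mo0_one by lia. rewrite Mo1_zero by lia. rewrite Mo2_exact by lia. rewrite Mo3_exact by lia. rewrite Mo4_exact by lia. unfold p2. unfold p3. unfold p4. unfold c5, L5; ring.
  - intros m hm. unfold p5, c5, L5. rewrite S_INR. field. apply Rgt_not_eq; apply lt_0_INR; lia.
  - unfold c5. simpl INR. field.
Qed.

Lemma Mo6_rec n : (3 <= n)%nat -> Mo 6 (S n) = mc [((22/729) + (0) / INR n); ((20/81) + (-14/81) / INR n); ((10/9) + (-44/27) / INR n); ((40/27) + (-50/9) / INR n); ((10/3) + (-40/3) / INR n); ((0) + (-10) / INR n); ((1) + (-12) / INR n)] 0 n.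
Proof. intros h. rewrite Mo_rec by exact h. rewrite <- E_pv. apply E_ext; intros k. unfold h_r, pv. field. apply Rgt_not_eq, INR_pos3; exact h. Qed.

Definition L6 (n : nat) := ((22/729) + (0) / INR n) * 1 + ((20/81) + (-14/81) / INR n) * 0 + ((10/9) + (-44/27) / INR n) * (2*INR n/45) + ((40/27) + (-50/9) / INR n) * (-2*INR n/945) + ((10/3) + (-40/3) / INR n) * (-22*INR n/4725 + 4*INR n^2/675) + ((0) + (-10) / INR n) * (2*INR n/4455 - 8*INR n^2/8505).
Definition p6 (n : nat) := (94442*INR n/42567525 - 2732*INR n^2/893025 + 8*INR n^3/6075).
Definition c6 (n : nat) := ((1) + (-12) / INR n).
Lemma Mo6_exact n : (13 <= n)%nat -> Mo 6 n = p6 n.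
Proof.
  apply (exact_from (Mo 6) p6 c6 L6 12).
  - intros m hm. rewrite Mo6_rec by lia. simpl mc. rewrite Mo0_one by lia. rewrite Mo1_zero by lia. rewrite Mo2_exact by lia. rewrite Mo3_exact by lia. rewrite Mo4_exact by lia. rewrite Mo5_exact by lia. unfold p2. unfold p3. unfold p4. unfold p5. unfold c6, L6; ring.
  - intros m hm. unfold p6, c6, L6. rewrite S_INR. field. apply Rgt_not_eq; apply lt_0_INR; lia.
  - unfold c6. simpl INR. field.
Qed.

Lemma mean_eq n : (3 <= n)%nat -> mean PZ n = INR n / 3.
Proof.
  intros h. change (mean PZ n) with (E n INR).
  transitivity (E n (fun k => (INR k - INR n / 3) ^ 1 + INR n / 3 * 1)).
  - apply E_ext; intros; ring.
  - rewrite E_add, E_scal, E_one by exact h. fold (Mo 1 n). rewrite Mo1_zero by exact h. ring.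
Qed.

Lemma cm_eq m n : (3 <= n)%nat -> central_moment PZ m n = Mo m n.
Proof. intros h. unfold central_moment. rewrite mean_eq by exact h. reflexivity. Qed.

Lemma var_eq n : (5 <= n)%nat -> central_moment PZ 2 n = 2 * INR n / 45.
Proof. intros h. rewrite cm_eq by lia. rewrite Mo2_exact by lia. reflexivity. Qed.

Lemma M6_bound n : (13 <= n)%nat -> Rabs (central_moment PZ 6 n) <= 1 * INR n ^ 3.
Proof.
  intros h. rewrite cm_eq by lia. rewrite Mo6_exact by lia. unfold p6.
  assert (hx : 1 <= INR n) by (apply (le_INR 1); lia).
  set (x := INR n) in *.
  assert (x <= x^3) by nra. assert (x^2 <= x^3) by nra.
  apply Rabs_le. split; nra.
Qed.

Lemma PZ_half n k : (3 <= n)%nat -> (n < 2 * k)%nat -> PZ n k = 0.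
Proof.
  intros h. revert k. induction n as [|n IH]; intros k hk; [lia|].
  destruct (Nat.eq_dec n 2) as [->|hn].
  - apply PZ3_ne. lia.
  - destruct k as [|k]; [lia|].
    rewrite PZ_rec by lia. rewrite (IH ltac:(lia) (S k)) by lia.
    destruct (le_lt_dec (2 * k) n) as [h2|h2].
    + assert (n = 2 * k)%nat by lia. subst n.
      replace (INR (2 * k) - 2 * INR k) with 0 by (rewrite mult_INR; simpl; ring).
      unfold Rdiv; ring.
    + rewrite (IH ltac:(lia) k) by lia. ring.
Qed.

Lemma cdf_rec n k : (3 <= n)%nat ->
  cdf PZ (S n) k = cdf PZ n k - (1 - 2 * INR k / INR n) * PZ n k.
Proof.
  intros h. pose proof (INR_pos3 n h). unfold cdf. induction k as [|k IH].
  - simpl. rewrite PZ_rec0, PZ_zero by lia. ring.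
  - rewrite !tech5, IH. rewrite PZ_rec by exact h. rewrite S_INR. field. lra.
Qed.

Lemma cdf_mono3 n k : (3 <= n)%nat -> cdf PZ n k >= cdf PZ (S n) k.
Proof.
  intros h. pose proof (INR_pos3 n h). rewrite cdf_rec by exact h.
  destruct (le_lt_dec (2 * k) n) as [h2|h2].
  - assert (2 * INR k <= INR n) by (rewrite <- (mult_INR 2) ; apply le_INR; exact h2).
    assert (0 <= 1 - 2 * INR k / INR n).
    { assert (H3 : 2 * INR k / INR n <= 1).
      { unfold Rdiv. apply (Rmult_le_reg_r (INR n)); [lra|].
        rewrite Rmult_assoc, Rinv_l, Rmult_1_r by lra. lra. }
      lra. }
    pose proof (PZ_nonneg n k ltac:(lia)). nra.
  - rewrite PZ_half by lia. lra.
Qed.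

Lemma PZ_small_eq3 n k : (1 <= n <= 2)%nat -> PZ n k = PZ 3 k.
Proof.
  intros h. destruct (Nat.eq_dec k 1) as [->|hk].
  - rewrite PZ3_1, PZ_small_1 by lia. reflexivity.
  - rewrite PZ3_ne, PZ_small_ne by lia. reflexivity.
Qed.

Lemma cdf_mono n k : (1 <= n)%nat -> cdf PZ n k >= cdf PZ (S n) k.
Proof.
  intros h. destruct (le_lt_dec n 2) as [h2|h2].
  - apply Req_ge. unfold cdf. apply sum_eq; intros i _.
    rewrite (PZ_small_eq3 n) by lia.
    destruct (Nat.eq_dec n 2) as [->|hn]; [reflexivity|].
    rewrite (PZ_small_eq3 (S n)) by lia. reflexivity.
  - apply cdf_mono3; lia.
Qed.

Lemma Rpower_pos x y : 0 < Rpower x y.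
Proof. unfold Rpower; apply exp_pos. Qed.

Lemma key n : (13 <= n)%nat ->
  / ((Rpower (ln (INR n)) (-1 - 1/2)) ^ 6 * INR n ^ 3) <= 18 ^ 9 * Rpower (INR n) (-2 - 1/2).
Proof.
  intros hn.
  assert (hx : 13 <= INR n) by (replace 13 with (INR 13) by (simpl; ring); apply le_INR; lia).
  set (x := INR n) in *.
  assert (hL : 0 < ln x) by (rewrite <- ln_1; apply ln_increasing; lra).
  set (L := ln x) in *.
  assert (hd : Rpower L (-1 - 1/2) ^ 6 = / L ^ 9).
  { rewrite <- Rpower_pow by apply Rpower_pos. rewrite Rpower_mult.
    replace ((-1 - 1/2) * INR 6) with (- INR 9) by (simpl; field).
    rewrite Rpower_Ropp, Rpower_pow by exact hL. reflexivity. }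
  rewrite hd.
  set (u := Rpower x (1/18)).
  assert (hu0 : 0 < u) by apply Rpower_pos.
  assert (hu : u ^ 18 = x).
  { unfold u. rewrite <- Rpower_pow by apply Rpower_pos. rewrite Rpower_mult.
    replace (1/18 * INR 18) with 1 by (simpl; field). apply Rpower_1; lra. }
  assert (hu9 : Rpower x (-2 - 1/2) = / (x ^ 2 * u ^ 9)).
  { replace (-2 - 1/2) with (- (INR 2 + 1/18 * INR 9)) by (simpl; field).
    rewrite Rpower_Ropp, Rpower_plus, Rpower_pow by lra. unfold u.
    rewrite <- Rpower_mult, Rpower_pow by apply Rpower_pos. reflexivity. }
  rewrite hu9.
  assert (hLu : L = 18 * ln u).
  { unfold L. rewrite <- hu, ln_pow by exact hu0. simpl; ring. }
  assert (hlu : ln u <= u).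
  { pose proof (exp_ineq1_le (ln u)) as H. rewrite exp_ln in H by exact hu0. lra. }
  assert (hL9 : L ^ 9 <= (18 * u) ^ 9).
  { apply pow_incr. split; lra. }
  assert (hx2 : 0 < x ^ 2) by (apply pow_lt; lra).
  assert (hu9p : 0 < u ^ 9) by (apply pow_lt; lra).
  replace (/ (/ L ^ 9 * x ^ 3)) with (L ^ 9 * / (x ^ 2 * u ^ 18)).
  2:{ rewrite hu. field. repeat split; try apply pow_nonzero; lra. }
  replace (18 ^ 9 * / (x ^ 2 * u ^ 9)) with ((18 * u) ^ 9 * / (x ^ 2 * u ^ 18)).
  2:{ field. repeat split; try apply pow_nonzero; lra. }
  apply Rmult_le_compat_r; [|exact hL9].
  apply Rlt_le, Rinv_0_lt_compat. apply Rmult_lt_0_compat; [lra|apply pow_lt; lra].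
Qed.

Lemma tail_markov n D : (3 <= n)%nat -> 0 < D ->
  sum_f_R0 (fun k => if ssrbool.is_left (Rlt_dec D (Rabs (INR k - 1/3 * INR n))) then PZ n k else 0) n
  <= Mo 6 n / D ^ 6.
Proof.
  intros h hD. assert (hD6 : 0 < D ^ 6) by (apply pow_lt; lra).
  transitivity (sum_f_R0 (fun k => (INR k - INR n / 3) ^ 6 * PZ n k * / D ^ 6) n).
  2:{ apply Req_le. unfold Mo, E. transitivity (/ D^6 * sum_f_R0 (fun k => (INR k - INR n/3)^6 * PZ n k) n). { rewrite scal_sum; apply sum_eq; intros; ring. } field; lra. }
  apply sum_Rle; intros k hk.
  pose proof (PZ_nonneg n k ltac:(lia)) as HP.
  replace (1/3 * INR n) with (INR n / 3) by field.
  set (y := INR k - INR n / 3).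
  unfold ssrbool.is_left. destruct (Rlt_dec D (Rabs y)) as [hy|hy].
  - assert (hy6 : D ^ 6 <= y ^ 6).
    { replace (y ^ 6) with (Rabs y ^ 6) by (rewrite RPow_abs; rewrite Rabs_right; [ring|replace (y^6) with ((y^3)^2) by ring; apply Rle_ge, pow2_ge_0]).
      apply pow_incr; split; [lra|]. lra. }
    apply (Rmult_le_reg_r (D ^ 6)); [exact hD6|].
    replace (y ^ 6 * PZ n k * / D ^ 6 * D ^ 6) with (y ^ 6 * PZ n k) by (field; lra).
    nra.
  - replace (y ^ 6) with ((y ^ 3) ^ 2) by ring.
    apply Rmult_le_pos; [apply Rmult_le_pos; [apply pow2_ge_0|exact HP]|].
    apply Rlt_le, Rinv_0_lt_compat; exact hD6.
Qed.

Lemma PZ_sum n : (1 <= n)%nat -> sum_f_R0 (fun k => PZ n k) n = 1.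
Proof.
  intros h. destruct (le_lt_dec n 2) as [h2|h2].
  - destruct (Nat.eq_dec n 1) as [->|hn].
    + cbn [sum_f_R0]. rewrite PZ_small_1, PZ_small_ne by lia. ring.
    + assert (n = 2%nat) by lia. subst n. cbn [sum_f_R0].
      rewrite PZ_small_1, !PZ_small_ne by lia. ring.
  - rewrite <- (E_one n) by lia. unfold E. apply sum_eq; intros; ring.
Qed.

Lemma PZ_support n k : (1 <= n)%nat -> PZ n k <> 0 -> (1 <= k <= n)%nat.
Proof.
  intros h hk. destruct (le_lt_dec n 2) as [h2|h2].
  - destruct (Nat.eq_dec k 1) as [->|hk1]; [lia|].
    exfalso; apply hk; apply PZ_small_ne; lia.
  - destruct k as [|k]; [exfalso; apply hk; apply PZ_zero; lia|].
    destruct (le_lt_dec (S k) n) as [h3|h3]; [lia|].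
    exfalso; apply hk; apply PZ_big; lia.
Qed.

Lemma PZ_nn n : (2 <= n)%nat -> PZ n n < 1.
Proof.
  intros h. destruct (Nat.eq_dec n 2) as [->|hn].
  - rewrite PZ_small_ne by lia. lra.
  - rewrite PZ_half by lia. lra.
Qed.


End RealPart.
Import RealPart.

Open Scope R_scope.

Theorem mainTheorem11 :
  (* Z_n >= 1 *)
  (forall n, (1 <= n)%nat -> PZ n 0 = 0) /\
  (* stochastically increasing *)
  (forall n k, (1 <= n)%nat -> cdf PZ n k >= cdf PZ (S n) k) /\
  (* E Z_n = n/3 for n >= 3 *)
  (forall n, (3 <= n)%nat -> mean PZ n = INR n / 3) /\
  (* Var Z_n = 2n/45 for n >= 5 *)
  (forall n, (5 <= n)%nat -> central_moment PZ 2 n = 2 * INR n / 45) /\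
  (* E (Z_n - E Z_n)^6 = O(n^3) *)
  bigO (fun n => central_moment PZ 6 n) (fun n => INR n ^ 3) /\
  Condition1 PZ (1 / 3).
Proof.
  split; [exact PZ_zero|].
  split; [intros n k h; apply cdf_mono; exact h|].
  split; [exact mean_eq|].
  split; [exact var_eq|].
  split; [exists 1, 13%nat; intros n h; apply M6_bound; apply leqP'; exact h|].
  split; [intros n k h; apply PZ_nonneg; apply leqP'; exact h|].
  split; [intros n h; apply PZ_sum; apply leqP'; exact h|].
  split; [intros n k h hk; apply leq2P; apply PZ_support; [apply leqP'; exact h|exact hk]|].
  split; [intros n h; apply PZ_nn; apply leqP'; exact h|].
  split; [intros n k h _; apply cdf_mono; apply leqP'; exact h|].
  split; [lra|].
  exists (1/2), (fun n => Rpower (ln (INR n)) (-1 - 1/2)).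
  split; [lra|].
  split.
  { exists 1, 0%nat. intros n _. pose proof (Rpower_pos (ln (INR n)) (-1 - 1/2)).
    rewrite Rabs_right by lra. lra. }
  split.
  { exists 0, 3%nat. intros n hn. apply leqP' in hn. rewrite !mean_eq by lia. rewrite S_INR.
    replace ((INR n + 1) / 3 - INR n / 3 - 1 / 3) with 0 by field.
    rewrite Rabs_R0. lra. }
  exists (18 ^ 9), 13%nat. intros n hn. apply leqP' in hn.
  set (d := Rpower (ln (INR n)) (-1 - 1/2)).
  assert (hd : 0 < d) by apply Rpower_pos.
  assert (hx : 13 <= INR n) by (replace 13 with (INR 13) by (simpl; ring); apply le_INR; lia).
  assert (hD : 0 < d * INR n) by (apply Rmult_lt_0_compat; lra).
  pose proof (tail_markov n (d * INR n) ltac:(lia) hD) as HT.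
  rewrite Rabs_right.
  2:{ apply Rle_ge, cond_pos_sum. intros k. unfold ssrbool.is_left. destruct (Rlt_dec _ _); [apply PZ_nonneg; lia|lra]. }
  eapply Rle_trans; [exact HT|].
  pose proof (M6_bound n hn) as HM. rewrite cm_eq in HM by lia.
  assert (HM2 : Mo 6 n <= 1 * INR n ^ 3) by (eapply Rle_trans; [apply Rle_abs|exact HM]). clear HM. rename HM2 into HM.
  eapply Rle_trans; [|apply (key n hn)].
  fold d.
  assert (hd6 : 0 < d ^ 6) by (apply pow_lt; lra).
  assert (hx3 : 0 < INR n ^ 3) by (apply pow_lt; lra).
  replace (/ (d ^ 6 * INR n ^ 3)) with ((1 * INR n ^ 3) / (d * INR n) ^ 6)
    by (field; split; lra).
  unfold Rdiv. apply Rmult_le_compat_r; [|exact HM].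
  apply Rlt_le, Rinv_0_lt_compat, pow_lt; exact hD.
Qed.
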